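(* If $\gamma$ is an edge path in the 1-skeleton of $K$ of length $n$ which has minimal length among edge paths joining its endpoints, then its subdivision $\omega(\gamma)$ is an edge path in the 1-skeleton of $\omega(K)$ of length $2n$ which has minimal length among edge paths in $\omega(K)$ joining its endpoints.
   Context: $K$ is the pentagonal combinatorial tiling: a 2-dimensional CW-complex homeomorphic to the open disk, obtained as follows. The subdivision rule $\omega$ acts on a pentagon with boundary vertices $v_1,\dots,v_5$ in cyclic order (indices mod 5): add a vertex $m_i$ inside each edge $v_iv_{i+1}$, interior vertices $c_1,\dots,c_5$, edges $c_ic_{i+1}$ and $c_im_i$, and replace the face by the central pentagon $c_1\cdots c_5$ and petals $v_i\,m_i\,c_i\,c_{i-1}\,m_{i-1}$. $K_0$ is one pentagon, $K_n=\omega^n(K_0)$, $K_n$ embeds onto the central superpentagon $\omega^n(\text{central face of }\omega(K_0))$ of $K_{n+1}$, and $K$ is the direct limit. $\omega(K)$ is the complex on the same space obtained by applying $\omega$ to every face of $K$; each edge of $K$ becomes two edges of $\omega(K)$, so an edge path $\gamma$ of $K$ becomes an edge path $\omega(\gamma)$ of $\omega(K)$. The length of an edge path is its number of edges. *)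

(* Defs.v *)
From HB Require Import structures.
From mathcomp Require Import all_boot.
Set Implicit Arguments.
Unset Strict Implicit.
Unset Printing Implicit Defensive.

(* Symbolic names of vertices.
   - Base i  : (i = 0..4) the vertices v_0..v_4 of the initial pentagon K_0;
   - Mid a b : the midpoint of the edge {a,b} (always built with [mkMid],
               which orders the two endpoints, so that the name is symmetric);
   - Cen a b : the new interior vertex c of the face F having the directed
               edge a -> b on its boundary (all faces are consistently
               oriented, so F is determined by a -> b), namely the c adjacent
               to the midpoint of {a,b}. *)
Inductive pt : Type :=
| Base of nat
| Mid of pt & pt
| Cen of pt & pt.

Fixpoint pt_enc (v : pt) : GenTree.tree nat :=
  match v with
  | Base i => GenTree.Leaf i
  | Mid a b => GenTree.Node 0 [:: pt_enc a; pt_enc b]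
  | Cen a b => GenTree.Node 1 [:: pt_enc a; pt_enc b]
  end.

Fixpoint pt_dec (t : GenTree.tree nat) : option pt :=
  match t with
  | GenTree.Leaf i => Some (Base i)
  | GenTree.Node 0 [:: ta; tb] =>
      match pt_dec ta, pt_dec tb with Some a, Some b => Some (Mid a b) | _, _ => None end
  | GenTree.Node 1 [:: ta; tb] =>
      match pt_dec ta, pt_dec tb with Some a, Some b => Some (Cen a b) | _, _ => None end
  | _ => None
  end.

Lemma pt_encK : pcancel pt_enc pt_dec.
Proof. by elim=> [i|a IHa b IHb|a IHa b IHb] //=; rewrite IHa IHb. Qed.

Fixpoint pt_eqb (a b : pt) : bool :=
  match a, b with
  | Base i, Base j => i == j
  | Mid a1 a2, Mid b1 b2 => pt_eqb a1 b1 && pt_eqb a2 b2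
  | Cen a1 a2, Cen b1 b2 => pt_eqb a1 b1 && pt_eqb a2 b2
  | _, _ => false
  end.

Lemma pt_eqbP : Equality.axiom pt_eqb.
Proof.
elim=> [i|a1 IH1 a2 IH2|a1 IH1 a2 IH2] [j|b1 b2|b1 b2] /=; try by constructor.
- by apply: (iffP eqP) => [->|[->]].
- by apply: (iffP andP) => [[/IH1-> /IH2->]|[<- <-]]; split; [apply/IH1|apply/IH2].
- by apply: (iffP andP) => [[/IH1-> /IH2->]|[<- <-]]; split; [apply/IH1|apply/IH2].
Qed.

HB.instance Definition _ := hasDecEq.Build pt pt_eqbP.
HB.instance Definition _ := PCanIsCountable pt_encK.

Fixpoint ptcmp (a b : pt) : comparison :=
  match a, b with
  | Base i, Base j => Nat.compare i j
  | Base _, _ => Lt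
  | _, Base _ => Gt
  | Mid a1 a2, Mid b1 b2 =>
      match ptcmp a1 b1 with Eq => ptcmp a2 b2 | c => c end
  | Mid _ _, Cen _ _ => Lt
  | Cen _ _, Mid _ _ => Gt
  | Cen a1 a2, Cen b1 b2 =>
      match ptcmp a1 b1 with Eq => ptcmp a2 b2 | c => c end
  end.

Definition mkMid (a b : pt) : pt :=
  if ptcmp a b is Gt then Mid b a else Mid a b.


(* One application of the subdivision rule omega to an oriented pentagon
   f = [v_0; ...; v_4]: the central pentagon c_0 ... c_4 and the petals
   v_i m_i c_i c_{i-1} m_{i-1}, where m_i = midpoint of v_i v_{i+1} and
   c_i = Cen v_i v_{i+1}. *)
Definition omega_face (f : seq pt) : seq (seq pt) :=
  let v i := nth (Base 0) f (i %% 5) in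
  [seq Cen (v i) (v i.+1) | i <- iota 0 5] ::
  [seq [:: v i; mkMid (v i) (v i.+1); Cen (v i) (v i.+1);
         Cen (v (i + 4)) (v i); mkMid (v (i + 4)) (v i)] | i <- iota 0 5].

Fixpoint faces (n : nat) : seq (seq pt) :=
  match n with
  | 0 => [:: [seq Base i | i <- iota 0 5]]
  | n.+1 => flatten [seq omega_face f | f <- faces n]
  end.

Definition vertK (n : nat) (v : pt) : bool := has (fun f => v \in f) (faces n).

Definition consec (f : seq pt) (u v : pt) : bool :=
  has (fun i => (nth (Base 0) f i == u) && (nth (Base 0) f (i.+1 %% 5) == v))
      (iota 0 5).

Definition adjK (n : nat) (u v : pt) : bool :=
  has (fun f => consec f u v || consec f v u) (faces n).

(* The embedding K_n -> K_{n+1} onto the central superpentagon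
   omega^n(central face of omega(K_0)), v_i |-> c_i, extended to all names;
   it is also the embedding omega(K_n) = K_{n+1} -> K_{n+2} = omega(K_{n+1}). *)
Fixpoint emb (v : pt) : pt :=
  match v with
  | Base i => Cen (Base i) (Base (i.+1 %% 5))
  | Mid a b => mkMid (emb a) (emb b)
  | Cen a b => Cen (emb a) (emb b)
  end.

Definition lift (k : nat) (v : pt) : pt := iter k emb v.

(* A vertex of the limit is represented by a pair (n, v),
   v a name at stage n; the stage-n complex is K_(n+d), where d = 0 gives
   K = lim K_n and d = 1 gives omega(K) = lim omega(K_n) = lim K_(n+1). *)
Definition lvert (d : nat) (x : nat * pt) : Prop :=
  exists N, x.1 <= N /\ vertK (N + d) (lift (N - x.1) x.2).

Definition leq_vert (x y : nat * pt) : Prop :=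
  exists N, [/\ x.1 <= N, y.1 <= N & lift (N - x.1) x.2 = lift (N - y.1) y.2].

Definition ladj (d : nat) (x y : nat * pt) : Prop :=
  exists N, [/\ x.1 <= N, y.1 <= N & adjK (N + d) (lift (N - x.1) x.2) (lift (N - y.1) y.2)].

Fixpoint ladj_chain (d : nat) (p : seq (nat * pt)) : Prop :=
  match p with
  | x :: ((y :: _) as t) => ladj d x y /\ ladj_chain d t
  | _ => True
  end.

Definition is_edge_path (d : nat) (p : seq (nat * pt)) : Prop :=
  p <> [::] /\ (forall x, x \in p -> lvert d x) /\ ladj_chain d p.

Definition plength (p : seq (nat * pt)) : nat := (size p).-1.

Definition pstart (p : seq (nat * pt)) := head (0, Base 0) p.
Definition pend (p : seq (nat * pt)) := last (0, Base 0) p.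

Definition is_geodesic (d : nat) (p : seq (nat * pt)) : Prop :=
  forall q, is_edge_path d q -> leq_vert (pstart q) (pstart p) ->
    leq_vert (pend q) (pend p) -> plength p <= plength q.

Definition lmid (x y : nat * pt) : nat * pt :=
  let N := maxn x.1 y.1 in (N, mkMid (lift (N - x.1) x.2) (lift (N - y.1) y.2)).

(* omega(gamma): every edge x y of gamma is replaced by x, mid(x,y), y.
   A vertex (n, v) of K is the same vertex (n, v) of omega(K). *)
Fixpoint omega_path (p : seq (nat * pt)) : seq (nat * pt) :=
  match p with
  | x :: ((y :: _) as t) => x :: lmid x y :: omega_path t
  | _ => p
  end.

(* Main.v *)
Require Import Defs.
From mathcomp Require Import all_boot.
From mathcomp Require Import zify.
Set Implicit Arguments. Unset Strict Implicit. Unset Printing Implicit Defensive.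


Arguments mkMid : simpl never.
Notation lft := Defs.lift.

Lemma ptcmp_sym a b : ptcmp b a = CompOpp (ptcmp a b).
Proof.
elim: a b => [i|a1 IH1 a2 IH2|a1 IH1 a2 IH2] [j|b1 b2|b1 b2] //=.
- by rewrite PeanoNat.Nat.compare_antisym.
- by rewrite IH1; case: (ptcmp a1 b1) => //=; rewrite IH2.
- by rewrite IH1; case: (ptcmp a1 b1) => //=; rewrite IH2.
Qed.

Lemma ptcmp_eq a b : ptcmp a b = Eq -> a = b.
Proof.
elim: a b => [i|a1 IH1 a2 IH2|a1 IH1 a2 IH2] [j|b1 b2|b1 b2] //=.
- by move/PeanoNat.Nat.compare_eq => ->.
- by case E: (ptcmp a1 b1) => // /IH2 ->; rewrite (IH1 _ E).
- by case E: (ptcmp a1 b1) => // /IH2 ->; rewrite (IH1 _ E).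
Qed.

Lemma mkMid_sym a b : mkMid a b = mkMid b a.
Proof.
rewrite /mkMid [ptcmp b a]ptcmp_sym; case E: (ptcmp a b) => //=.
by rewrite (ptcmp_eq E).
Qed.

Lemma mkMidE a b : mkMid a b = Mid a b \/ mkMid a b = Mid b a.
Proof. by rewrite /mkMid; case: (ptcmp a b); auto. Qed.

Lemma mkMid_inj a b c d : mkMid a b = mkMid c d -> (a = c /\ b = d) \/ (a = d /\ b = c).
Proof.
by case: (mkMidE a b) => ->; case: (mkMidE c d) => -> [-> ->]; auto.
Qed.

Lemma mkMid_Cen a b c d : mkMid a b <> Cen c d.
Proof. by case: (mkMidE a b) => ->. Qed.

Lemma emb_mkMid a b : emb (mkMid a b) = mkMid (emb a) (emb b).
Proof. by case: (mkMidE a b) => -> //=; rewrite mkMid_sym. Qed.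

Lemma lft_mkMid k a b : lft k (mkMid a b) = mkMid (lft k a) (lft k b).
Proof. by elim: k => //= k IH; rewrite /Defs.lift /= -!/(Defs.lift _ _) IH emb_mkMid. Qed.

Lemma lftD m n a : lft (m + n) a = lft m (lft n a).
Proof. by rewrite /Defs.lift iterD. Qed.


Notation V f i := (nth (Base 0) f (i %% 5)).
Definition cc f i := Cen (V f i) (V f i.+1).
Definition mm f i := mkMid (V f i) (V f i.+1).
Definition petal f i := [:: V f i; mm f i; cc f i; cc f (i+4); mm f (i+4)].
Definition central f := [seq cc f i | i <- iota 0 5].

Lemma V_eq f i j : i %% 5 = j %% 5 -> V f i = V f j.
Proof. by move->. Qed.
Lemma V_i4S f i : V f (i+4).+1 = V f i.
Proof. apply V_eq; lia. Qed.
Lemma cc_mod f i : cc f (i %% 5) = cc f i.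
Proof. by rewrite /cc (@V_eq f (i %% 5) i) ?(@V_eq f (i %% 5).+1 i.+1) //; lia. Qed.
Lemma mm_mod f i : mm f (i %% 5) = mm f i.
Proof. by rewrite /mm (@V_eq f (i %% 5) i) ?(@V_eq f (i %% 5).+1 i.+1) //; lia. Qed.

Lemma omega_faceE f : omega_face f = central f :: [seq petal f i | i <- iota 0 5].
Proof.
rewrite /omega_face /=; by congr (_ :: _).
Qed.


Lemma faces_SP n g : reflect (exists2 f, f \in faces n & g \in omega_face f) (g \in faces n.+1).
Proof. exact: flatten_mapP. Qed.

Lemma omega_faceP f g : g \in omega_face f -> g = central f \/ exists2 i, i < 5 & g = petal f i.
Proof.
rewrite omega_faceE inE => /orP[/eqP->|/mapP[i]]; first by left.
by rewrite mem_iota => /andP[_ Hi] ->; right; exists i.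
Qed.

Lemma size_faces n f : f \in faces n -> size f = 5.
Proof.
elim: n f => [|n IH] f; first by rewrite inE => /eqP->.
case/faces_SP => f0 _ /omega_faceP[->|[i _ ->]] //.
Qed.

Lemma mem_V f i : size f = 5 -> V f i \in f.
Proof. by move=> Hs; apply: mem_nth; rewrite Hs ltn_pmod. Qed.

Lemma consecP f u w : size f = 5 -> consec f u w -> exists2 i, i < 5 & u = V f i /\ w = V f i.+1.
Proof.
move=> Hs /hasP[i]; rewrite mem_iota add0n => /andP[_ Hi] /andP[/eqP<- /eqP<-].
by exists i => //; rewrite (modn_small Hi).
Qed.

Lemma consecV f i : size f = 5 -> consec f (V f i) (V f i.+1).
Proof.
move=> Hs; apply/hasP; exists (i %% 5); first by rewrite mem_iota ltn_pmod.
apply/andP; split=> //; apply/eqP; apply: V_eq; lia.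
Qed.

Lemma V_central f k : V (central f) k = cc f k.
Proof.
rewrite /central (nth_map 0) ?size_iota ?ltn_pmod // nth_iota ?ltn_pmod // add0n cc_mod //.
Qed.

Lemma V_petal f i k : V (petal f i) k =
  nth (Base 0) [:: V f i; mm f i; cc f i; cc f (i+4); mm f (i+4)] (k %% 5).
Proof. by []. Qed.


Lemma cc_eq f i j : i %% 5 = j %% 5 -> cc f i = cc f j.
Proof. by move=> H; rewrite -cc_mod H cc_mod. Qed.
Lemma mm_eq f i j : i %% 5 = j %% 5 -> mm f i = mm f j.
Proof. by move=> H; rewrite -mm_mod H mm_mod. Qed.

Inductive otype f u w : Prop :=
| OT0 e of u = cc f e & w = cc f e.+1
| OT1 e of u = V f e & w = mm f e
| OT2 e of u = mm f e & w = cc f e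
| OT3 e of u = cc f e & w = cc f (e+4)
| OT4 e of u = cc f e & w = mm f e
| OT5 e of u = mm f e & w = V f e.+1.

Lemma size_petal f i : size (petal f i) = 5. Proof. by []. Qed.
Lemma size_central f : size (central f) = 5. Proof. by rewrite size_map size_iota. Qed.

Lemma consec_omega f g u w : g \in omega_face f -> consec g u w -> otype f u w.
Proof.
case/omega_faceP => [->|[i Hi ->]].
  case/consecP => [|k Hk []]; first exact: size_central.
  by rewrite !V_central => -> ->; apply: OT0.
case/consecP => [//|k Hk []].
case: k Hk => [|[|[|[|[|k]]]]] Hk //= => -> ->.
- exact: OT1.
- exact: OT2.
- exact: OT3.
- exact: OT4.
- by apply: (OT5 (e := i+4)); rewrite // V_i4S.
Qed.

Lemma adjS N u w : adjK N.+1 u w ->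
  exists2 f, f \in faces N & (otype f u w \/ otype f w u).
Proof.
case/hasP => g /faces_SP[f Hf Hg] /orP[]H; exists f => //.
- by left; apply: consec_omega H.
- by right; apply: consec_omega H.
Qed.

Lemma petal_in f j : j < 5 -> petal f j \in omega_face f.
Proof. by move=> Hj; rewrite omega_faceE inE map_f ?orbT // mem_iota. Qed.
Lemma central_in f : central f \in omega_face f.
Proof. by rewrite omega_faceE mem_head. Qed.

Lemma adjK_of N f g u w : f \in faces N -> g \in omega_face f -> consec g u w -> adjK N.+1 u w.
Proof.
move=> Hf Hg Hc; apply/hasP; exists g; last by rewrite Hc.
by apply/faces_SP; exists f.
Qed.

Lemma otype_adj N f u w : f \in faces N -> otype f u w -> adjK N.+1 u w.
Proof.
move=> Hf [] e -> ->.
- apply: (adjK_of Hf (central_in f)).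
  by have := consecV e (size_central f); rewrite !V_central.
- apply: (adjK_of Hf (petal_in f (ltn_pmod e (isT : 0 < 5)))).
  by have := consecV 0 (size_petal f (e %% 5)); rewrite /= mm_mod modn_mod.
- apply: (adjK_of Hf (petal_in f (ltn_pmod e (isT : 0 < 5)))).
  have := consecV 1 (size_petal f (e %% 5)); by rewrite /= mm_mod cc_mod.
- apply: (adjK_of Hf (petal_in f (ltn_pmod e (isT : 0 < 5)))).
  have := consecV 2 (size_petal f (e %% 5)); rewrite /=.
  by rewrite cc_mod (@cc_eq f (e %% 5 + 4) (e + 4)) //; lia.
- apply: (adjK_of Hf (petal_in f (ltn_pmod e.+1 (isT : 0 < 5)))).
  have := consecV 3 (size_petal f (e.+1 %% 5)); rewrite /=.
  by rewrite (@cc_eq f (e.+1 %% 5 + 4) e) ?(@mm_eq f (e.+1 %% 5 + 4) e) //; lia.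
- apply: (adjK_of Hf (petal_in f (ltn_pmod e.+1 (isT : 0 < 5)))).
  have := consecV 4 (size_petal f (e.+1 %% 5)); rewrite /=.
  by rewrite modn_mod (@mm_eq f (e.+1 %% 5 + 4) e) //; lia.
Qed.


Definition Uniq N := forall f, f \in faces N -> uniq f.
Definition UE N := forall f g, f \in faces N -> g \in faces N -> forall i j, i < 5 -> j < 5 ->
  V f i = V g j -> V f i.+1 = V g j.+1 -> f = g /\ i = j.
Definition AB N := forall u a b, vertK N u -> (u = Mid a b \/ u = Cen a b) ->
  [/\ vertK N a, vertK N b & ~~ adjK N a b].
Definition Inv N := [/\ Uniq N, UE N & AB N].

Lemma adjK_sym N u w : adjK N u w = adjK N w u.
Proof. by apply: eq_has => g; rewrite orbC. Qed.

Lemma vertK_V N f i : f \in faces N -> vertK N (V f i).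
Proof. by move=> Hf; apply/hasP; exists f => //; apply: mem_V; apply: size_faces Hf. Qed.

Lemma adjK_V N f i : f \in faces N -> adjK N (V f i) (V f i.+1).
Proof.
move=> Hf; apply/hasP; exists f => //; rewrite consecV //; exact: size_faces Hf.
Qed.

Lemma vertK_P N u : vertK N u -> exists2 f, f \in faces N & exists2 i, i < 5 & u = V f i.
Proof.
case/hasP => f Hf Hu; exists f => //; have Hs := size_faces Hf.
exists (index u f); first by rewrite -Hs index_mem.
by rewrite modn_small ?nth_index // -Hs index_mem.
Qed.

Lemma adjK_vertK N u w : adjK N u w -> vertK N u /\ vertK N w.
Proof.
have Hs := fun f => @size_faces N f.
case/hasP => f Hf /orP[] /consecP [] //; try exact: Hs;
  by move=> i _ [-> ->]; split; apply: vertK_V.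
Qed.

Lemma V_inj N f i j : Uniq N -> f \in faces N -> V f i = V f j -> i %% 5 = j %% 5.
Proof.
move=> HU Hf /eqP; have Hs := size_faces Hf.
by rewrite nth_uniq ?Hs ?ltn_pmod ?HU // => /eqP.
Qed.

Lemma S2 N f e : Inv N -> f \in faces N -> vertK N (mm f e) = false /\ vertK N (cc f e) = false.
Proof.
case=> _ _ HA Hf; split; apply/negP => Hv.
- have [H1|H1] := mkMidE (V f e) (V f e.+1); rewrite /mm H1 in Hv.
  + by case: (HA _ _ _ Hv (or_introl erefl)) => _ _; rewrite adjK_V.
  + by case: (HA _ _ _ Hv (or_introl erefl)) => _ _; rewrite adjK_sym adjK_V.
- by case: (HA _ _ _ Hv (or_intror erefl)) => _ _; rewrite adjK_V.
Qed.

Lemma vertS N u : vertK N.+1 u ->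
  exists2 f, f \in faces N & exists e, [\/ u = V f e, u = mm f e | u = cc f e].
Proof.
case/hasP => g /faces_SP[f Hf Hg] Hu; exists f => //.
case/omega_faceP: Hg Hu => [->|[i Hi ->]].
- by case/mapP => e _ ->; exists e; constructor 3.
- rewrite !inE => /or4P[/eqP->|/eqP->|/eqP->|/orP[/eqP->|/eqP->]].
  by exists i; constructor 1.
  by exists i; constructor 2.
  by exists i; constructor 3.
  by exists (i+4); constructor 3.
  by exists (i+4); constructor 2.
Qed.

Lemma vertS_V N f e : f \in faces N -> [/\ vertK N.+1 (V f e), vertK N.+1 (mm f e) & vertK N.+1 (cc f e)].
Proof.
move=> Hf; have Hg := petal_in f (ltn_pmod e (isT : 0 < 5)).
have Hg' : petal f (e %% 5) \in faces N.+1 by apply/faces_SP; exists f.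
split; apply/hasP; exists (petal f (e %% 5)) => //; rewrite !inE ?modn_mod ?mm_mod ?cc_mod eqxx ?orbT //.
Qed.

Lemma persist N u : vertK N u -> vertK N.+1 u.
Proof. by case/vertK_P => f Hf [i _ ->]; case: (vertS_V i Hf). Qed.

Lemma old_nonadj N a b : Inv N -> vertK N a -> vertK N b -> adjK N.+1 a b = false.
Proof.
move=> HI Ha Hb; apply/negP => /adjS [f Hf].
have HS := fun e => S2 e HI Hf.
by case=> [] [] e H1 H2; subst; rewrite ?(proj1 (HS _)) ?(proj2 (HS _)) in Ha Hb.
Qed.


Lemma Inv0 : Inv 0.
Proof.
have HV i : i < 5 -> V [seq Base i | i <- iota 0 5] i = Base i.
  by move=> Hi; rewrite (nth_map 0) ?size_iota ?modn_small // nth_iota.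
split.
- by move=> f; rewrite inE => /eqP->.
- move=> f g; rewrite !inE => /eqP-> /eqP-> i j Hi Hj.
  by rewrite (HV i) // (HV j) // => -[->].
- by move=> u a b Hu [] H; subst u.
Qed.

Section Step.
Variable N : nat.
Hypothesis HI : Inv N.

Lemma U_N : Uniq N. Proof. by case: HI. Qed.
Lemma UE_N : UE N. Proof. by case: HI. Qed.
Lemma AB_N : AB N. Proof. by case: HI. Qed.

Lemma Vneq f i j : f \in faces N -> i %% 5 != j %% 5 -> V f i <> V f j.
Proof. by move=> Hf /eqP H /(V_inj U_N Hf). Qed.

Lemma old_mm f e u : f \in faces N -> vertK N u -> u <> mm f e.
Proof. by move=> Hf Hu Heq; have := (S2 e HI Hf).1; rewrite -Heq Hu. Qed.
Lemma old_cc f e u : f \in faces N -> vertK N u -> u <> cc f e.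
Proof. by move=> Hf Hu Heq; have := (S2 e HI Hf).2; rewrite -Heq Hu. Qed.
Lemma mm_cc f i j : mm f i <> cc f j.
Proof. exact: mkMid_Cen. Qed.
Lemma cc_inj f i j : f \in faces N -> cc f i = cc f j -> i %% 5 = j %% 5.
Proof. by move=> Hf [/(V_inj U_N Hf)]. Qed.
Lemma mm_inj f i j : f \in faces N -> mm f i = mm f j ->
  i %% 5 = j %% 5 \/ (i.+1 %% 5 = j %% 5 /\ i %% 5 = j.+1 %% 5).
Proof.
move=> Hf /mkMid_inj [[/(V_inj U_N Hf) H _]|[/(V_inj U_N Hf) H1 /(V_inj U_N Hf) H2]]; auto.
Qed.

Lemma UniqS : Uniq N.+1.
Proof.
move=> g /faces_SP[f Hf /omega_faceP[->|[i Hi ->]]].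
- rewrite map_inj_in_uniq ?iota_uniq // => a b; rewrite !mem_iota => Ha Hb.
  move/(cc_inj Hf); rewrite !modn_small //; lia.
- have Ho := vertK_V i Hf.
  rewrite /petal /= !inE; repeat (apply/andP; split); rewrite ?negb_or;
    repeat (apply/andP; split); apply/eqP.
  all: try exact: (old_mm Hf Ho); try exact: (old_cc Hf Ho); try exact: mm_cc;
    try (move/esym; exact: mm_cc).
  all: try (move/(cc_inj Hf); lia).
  all: try (move/(mm_inj Hf); lia).
  all: by [].
Qed.

Lemma fin_old a b : vertK N a -> vertK N b -> [/\ vertK N.+1 a, vertK N.+1 b & ~~ adjK N.+1 a b].
Proof. by move=> Ha Hb; rewrite old_nonadj // !persist. Qed.

Lemma ABS : AB N.+1.
Proof.
move=> u a b /vertS[f Hf [e [->|->|->]]].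
- move=> H; have [Ha Hb _] := AB_N (vertK_V e Hf) H; exact: fin_old.
- case=> H; last by case: (mkMid_Cen H).
  rewrite /mm in H; case: (mkMidE (V f e) (V f e.+1)) => H'; rewrite H' in H; case: H => <- <-;
  apply: fin_old; exact: vertK_V.
- case=> // -[<- <-]; apply: fin_old; exact: vertK_V.
Qed.

Definition kappa (a b : pt) : (pt * pt) * nat :=
  if vertK N a then (if b is Mid p q then (if p == a then ((a,q),1) else ((a,p),1)) else ((a,a),9))
  else if vertK N b then (if a is Mid p q then (if q == b then ((p,b),5) else ((q,b),5)) else ((b,b),9))
  else match a, b with
  | Mid _ _, Cen x y => ((x,y),2)
  | Cen x y, Cen z _ => if z == y then ((x,y),0) else ((x,y),3)
  | Cen x y, Mid _ _ => ((x,y),4)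
  | _, _ => ((a,b),9) end.

Definition dec f e t := if t == 0 then (central f, e) else if t <= 3 then (petal f e, t.-1)
  else (petal f (e.+1 %% 5), t.-1).

Lemma Vneqb f i j : f \in faces N -> i %% 5 != j %% 5 -> (V f i == V f j) = false.
Proof. by move=> Hf H; apply/eqP; apply: Vneq. Qed.

Lemma kappa_spec f g k : f \in faces N -> g \in omega_face f -> k < 5 ->
  exists e t, [/\ e < 5, kappa (V g k) (V g k.+1) = ((V f e, V f e.+1), t) & dec f e t = (g, k)].
Proof.
move=> Hf Hg Hk; have HS := fun e => S2 e HI Hf; have HV := fun e => vertK_V e Hf.
case/omega_faceP: Hg => [->|[i Hi ->]].
  exists k, 0; rewrite !V_central /kappa !(proj2 (HS _)) /cc eqxx; split => //.
case: k Hk => [|[|[|[|[|k]]]]] Hk //=.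
- exists i, 1; rewrite /kappa HV /mm; split => //.
  case: (mkMidE (V f i) (V f i.+1)) => ->; rewrite ?eqxx // Vneqb //; lia.
- exists i, 2; rewrite /kappa !(proj1 (HS _)) !(proj2 (HS _)) /mm /cc; split => //.
  by case: (mkMidE (V f i) (V f i.+1)) => ->.
- exists i, 3; rewrite /kappa !(proj2 (HS _)) /cc Vneqb //; lia.
- exists ((i + 4) %% 5), 4; rewrite /kappa !(proj1 (HS _)) !(proj2 (HS _)) /mm /cc; split.
  + by rewrite ltn_pmod.
  + rewrite modn_mod (@V_eq f ((i + 4) %% 5).+1 (i+4).+1); last by lia.
    by case: (mkMidE (V f (i+4)) (V f (i+4).+1)) => ->.
  + rewrite /dec /= (_ : ((i + 4) %% 5).+1 %% 5 = i) //; lia.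
- exists ((i + 4) %% 5), 5; rewrite /kappa HV !(proj1 (HS _)) /mm; split.
  + by rewrite ltn_pmod.
  + rewrite modn_mod (@V_eq f ((i + 4) %% 5).+1 (i+4).+1); last by lia.
    rewrite V_i4S.
    case: (mkMidE (V f (i+4)) (V f i)) => ->; rewrite ?eqxx // Vneqb //; lia.
  + rewrite /dec /= (_ : ((i + 4) %% 5).+1 %% 5 = i) //; lia.
Qed.

Lemma UES : UE N.+1.
Proof.
move=> g g' /faces_SP[f Hf Hg] /faces_SP[f' Hf' Hg'] i j Hi Hj E1 E2.
have [e [t [He Hk Hd]]] := kappa_spec Hf Hg Hi.
have [e' [t' [He' Hk' Hd']]] := kappa_spec Hf' Hg' Hj.
rewrite E1 E2 Hk' in Hk; case: Hk => H1 H2 Ht; subst t'.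
have [Eff Eee] := UE_N Hf' Hf He' He H1 H2; subst f' e'.
by move: Hd'; rewrite Hd => -[-> ->].
Qed.

Lemma InvS : Inv N.+1.
Proof. split; [exact: UniqS | exact: UES | exact: ABS]. Qed.

End Step.

Lemma InvN N : Inv N.
Proof. elim: N => [|N IH]; [exact: Inv0 | exact: InvS]. Qed.


Definition cyc i j := minn ((i + 4*j) %% 5) (5 - (i + 4*j) %% 5).
Lemma n1 i j : cyc i.+1 j <= cyc i j + 1. Proof. rewrite /cyc; lia. Qed.
Lemma n1' i j : cyc i j <= cyc i.+1 j + 1. Proof. rewrite /cyc; lia. Qed.
Lemma n2 i j : cyc (i+4) j <= cyc i j + 1. Proof. rewrite /cyc; lia. Qed.
Lemma n2' i j : cyc i j <= cyc (i+4) j + 1. Proof. rewrite /cyc; lia. Qed.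
Lemma n3 e j : cyc e.+1 j + cyc e.+1 j.+1 <= 2 + cyc e j. Proof. rewrite /cyc; lia. Qed.
Lemma n4 e j : cyc e j <= 2. Proof. rewrite /cyc; lia. Qed.
Lemma n5 e : cyc e (e %% 5) = 0. Proof. rewrite /cyc; lia. Qed.
Lemma cyc_mod i j : cyc (i %% 5) j = cyc i j. Proof. by rewrite /cyc modnDml. Qed.

Section Core.
Variables (N : nat) (x0 : pt).

Definition R k u := exists p, [/\ path (adjK N) x0 p, last x0 p = u & size p <= k].

Lemma R0 : R 0 x0. Proof. by exists [::]. Qed.
Lemma R_mono k k' u : k <= k' -> R k u -> R k' u.
Proof. by move=> H [p [H1 H2 H3]]; exists p; split=> //; apply: leq_trans H. Qed.
Lemma R_step k u w : R k u -> adjK N u w -> R k.+1 w.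
Proof.
move=> [p [H1 H2 H3]] Ha; exists (rcons p w); split.
- by rewrite rcons_path H1 H2.
- by rewrite last_rcons.
- by rewrite size_rcons.
Qed.

Variable f : seq pt.
Hypothesis Hf : f \in faces N.

Lemma R_fwd K s n : R K (V f s) -> R (K + n) (V f (s + n)).
Proof.
elim: n => [|n IH] H; first by rewrite !addn0.
rewrite !addnS; apply: R_step (IH H) _; exact: adjK_V.
Qed.

Lemma R_bwd K s n : R K (V f s) -> R (K + n) (V f (s + 4 * n)).
Proof.
elim: n => [|n IH] H; first by rewrite addn0 muln0 addn0.
rewrite addnS; apply: R_step (IH H) _.
rewrite adjK_sym (@V_eq f (s + 4 * n) (s + 4 * n.+1 ).+1); last by lia.
exact: adjK_V.
Qed.

Lemma Rprop K s t : R K (V f s) -> R (K + cyc s t) (V f t).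
Proof.
move=> H; rewrite /cyc; set d := (s + 4 * t) %% 5.
have Hd : d < 5 by rewrite ltn_pmod.
case: (leqP d 2) => Hd2.
- rewrite (_ : minn d (5 - d) = d); last by lia.
  rewrite (@V_eq f t (s + 4 * d)); first exact: R_bwd.
  rewrite /d; lia.
- rewrite (_ : minn d (5 - d) = 5 - d); last by lia.
  rewrite (@V_eq f t (s + (5 - d))); first exact: R_fwd.
  rewrite /d; lia.
Qed.

End Core.


Section Cond.
Variables (N : nat) (x0 : pt).
Hypothesis HI : Inv N.
Notation R := (R N x0).

Definition CenCond L f i := forall j, j < 5 -> exists k1 k2,
  [/\ R k1 (V f j), R k2 (V f j.+1) & k1 + k2 <= L + 1 + cyc i j].

Definition Cond L u := if vertK N u then exists k, R k u /\ 2 * k <= L else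
  match u with
  | Mid a b => exists ka kb, [/\ R ka a, R kb b & ka + kb <= L]
  | Cen a b => forall f, f \in faces N -> forall i, i < 5 -> V f i = a -> V f i.+1 = b -> CenCond L f i
  | Base _ => False
  end.

Variable f : seq pt.
Hypothesis Hf : f \in faces N.

Lemma Cond_V L e : Cond L (V f e) <-> exists k, R k (V f e) /\ 2 * k <= L.
Proof. by rewrite /Cond vertK_V. Qed.

Lemma Cond_mm L e : Cond L (mm f e) <-> exists ka kb, [/\ R ka (V f e), R kb (V f e.+1) & ka + kb <= L].
Proof.
rewrite /Cond (proj1 (S2 e HI Hf)) /mm.
case: (mkMidE (V f e) (V f e.+1)) => -> //.
split=> -[ka [kb [H1 H2 H3]]]; exists kb, ka; split => //; lia.
Qed.

Lemma CenCond_mod L i : CenCond L f (i %% 5) <-> CenCond L f i.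
Proof.
split=> H j Hj; have [k1 [k2 [H1 H2 H3]]] := H j Hj; exists k1, k2; split => //;
  by move: H3; rewrite cyc_mod.
Qed.

Lemma Cond_cc L e : Cond L (cc f e) <-> CenCond L f e.
Proof.
rewrite /Cond (proj2 (S2 e HI Hf)) /cc; split.
- move=> H; apply/CenCond_mod; apply: H => //; first by rewrite ltn_pmod.
  + by rewrite modn_mod.
  + by apply: V_eq; lia.
- move=> H f' Hf' i Hi E1 E2.
  have E1' : V f' i = V f (e %% 5) by rewrite modn_mod.
  have E2' : V f' i.+1 = V f (e %% 5).+1 by rewrite E2; apply: V_eq; lia.
  have [-> ->] := (UE_N HI) _ _ Hf' Hf _ _ Hi (ltn_pmod e (isT : 0 < 5)) E1' E2'.
  by apply/CenCond_mod.
Qed.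

Lemma cc_cc L e e' : (forall j, cyc e j <= cyc e' j + 1) -> CenCond L f e -> CenCond L.+1 f e'.
Proof.
move=> Hc H j Hj; have [k1 [k2 [H1 H2 H3]]] := H j Hj.
exists k1, k2; split => //; have := Hc j; lia.
Qed.

Lemma cc_mm L e : CenCond L f e -> Cond L.+1 (mm f e).
Proof.
move=> H; apply/Cond_mm; have [k1 [k2 [H1 H2 H3]]] := H _ (ltn_pmod e (isT : 0 < 5)).
exists k1, k2; split.
- by rewrite -modn_mod.
- move: H2; rewrite (@V_eq f (e %% 5).+1 e.+1) //; lia.
- move: H3; rewrite n5; lia.
Qed.

Lemma mm2cc L e : Cond L (mm f e) -> CenCond L.+1 f e.
Proof.
case/Cond_mm => ka [kb [H1 H2 H3]] j Hj.
case: (leqP ka kb) => Hab.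
- exists (ka + cyc e j), (ka + cyc e j.+1); split; try exact: Rprop.
  have := n4 e j.+1; lia.
- exists (kb + cyc e.+1 j), (kb + cyc e.+1 j.+1); split; try exact: Rprop.
  have := n3 e j; lia.
Qed.

Lemma v_mm L e : Cond L (V f e) -> Cond L.+1 (mm f e).
Proof.
case/Cond_V => k [H1 H2]; apply/Cond_mm; exists k, k.+1; split => //.
- exact: R_step H1 (adjK_V e Hf).
- lia.
Qed.

Lemma v'_mm L e : Cond L (V f e.+1) -> Cond L.+1 (mm f e).
Proof.
case/Cond_V => k [H1 H2]; apply/Cond_mm; exists k.+1, k; split => //.
- by apply: R_step H1 _; rewrite adjK_sym; exact: adjK_V.
- lia.
Qed.

Lemma mm_v L e : Cond L (mm f e) -> Cond L.+1 (V f e).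
Proof.
case/Cond_mm => ka [kb [H1 H2 H3]]; apply/Cond_V.
case: (leqP ka kb) => Hab.
- exists ka; split => //; lia.
- exists kb.+1; split; last lia.
  by apply: R_step H2 _; rewrite adjK_sym; exact: adjK_V.
Qed.

Lemma mm_v' L e : Cond L (mm f e) -> Cond L.+1 (V f e.+1).
Proof.
case/Cond_mm => ka [kb [H1 H2 H3]]; apply/Cond_V.
case: (leqP kb ka) => Hab.
- exists kb; split => //; lia.
- exists ka.+1; split; last lia.
  exact: R_step H1 (adjK_V e Hf).
Qed.

Lemma step_otype L u w : otype f u w -> (Cond L u -> Cond L.+1 w) /\ (Cond L w -> Cond L.+1 u).
Proof.
case=> e -> ->; split.
- by move/Cond_cc => H; apply/Cond_cc; apply: cc_cc H => j; apply: n1'.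
- by move/Cond_cc => H; apply/Cond_cc; apply: cc_cc H => j; apply: n1.
- exact: v_mm.
- exact: mm_v.
- by move=> H; apply/Cond_cc; apply: mm2cc.
- by move/Cond_cc; apply: cc_mm.
- by move/Cond_cc => H; apply/Cond_cc; apply: cc_cc H => j; apply: n2'.
- by move/Cond_cc => H; apply/Cond_cc; apply: cc_cc H => j; apply: n2.
- by move/Cond_cc; apply: cc_mm.
- by move=> H; apply/Cond_cc; apply: mm2cc.
- exact: mm_v'.
- exact: v'_mm.
Qed.

End Cond.

Lemma Cond_step N x0 L u w : Inv N -> adjK N.+1 u w -> Cond N x0 L u -> Cond N x0 L.+1 w.
Proof.
move=> HI /adjS[f Hf [H|H]].
- exact: (step_otype x0 HI Hf L H).1.
- exact: (step_otype x0 HI Hf L H).2.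
Qed.

Lemma Cond_path N x0 s u L : Inv N -> path (adjK N.+1) u s -> Cond N x0 L u ->
  Cond N x0 (L + size s) (last u s).
Proof.
move=> HI; elim: s u L => [|w s IH] u L /=; first by rewrite addn0.
case/andP => Ha Hp Hc; rewrite addnS -addSn; apply: IH => //; exact: Cond_step Ha Hc.
Qed.

Lemma core N x0 y s : vertK N x0 -> vertK N y -> path (adjK N.+1) x0 s -> last x0 s = y ->
  exists p, [/\ path (adjK N) x0 p, last x0 p = y & 2 * size p <= size s].
Proof.
move=> Hx Hy Hp Hl; have HI := InvN N.
have H0 : Cond N x0 0 x0 by rewrite /Cond Hx; exists 0; split => //; exact: R0.
have := Cond_path HI Hp H0; rewrite Hl /Cond Hy add0n => -[k [[p [H1 H2 H3]] H4]].
exists p; split => //; lia.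
Qed.


Lemma V_emb f i : size f = 5 -> V (map emb f) i = emb (V f i).
Proof. by move=> Hs; rewrite (nth_map (Base 0)) // Hs ltn_pmod. Qed.

Lemma central_emb f : size f = 5 -> central (map emb f) = map emb (central f).
Proof. move=> Hs; rewrite /central -map_comp; apply: eq_map => i /=; by rewrite /cc !V_emb. Qed.

Lemma petal_emb f i : size f = 5 -> petal (map emb f) i = map emb (petal f i).
Proof. by move=> Hs; rewrite /petal /cc /mm /= !V_emb // !emb_mkMid. Qed.

Lemma omega_face_emb f : size f = 5 -> omega_face (map emb f) = map (map emb) (omega_face f).
Proof.
move=> Hs; rewrite !omega_faceE map_cons central_emb // -map_comp; congr (_ :: _).
by apply: eq_map => i /=; rewrite petal_emb.
Qed.

Lemma faces_emb n f : f \in faces n -> map emb f \in faces n.+1.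
Proof.
elim: n f => [|n IH] f.
  rewrite inE => /eqP->; apply/faces_SP; exists [seq Base i | i <- iota 0 5]; first exact: mem_head.
  by rewrite omega_faceE mem_head.
case/faces_SP => f0 Hf0 Hf; apply/faces_SP; exists (map emb f0); first exact: IH.
by rewrite omega_face_emb ?map_f //; exact: size_faces Hf0.
Qed.

Lemma vertK_emb n u : vertK n u -> vertK n.+1 (emb u).
Proof.
case/hasP => f Hf Hu; apply/hasP; exists (map emb f); [exact: faces_emb | exact: map_f].
Qed.

Lemma adjK_emb n u w : adjK n u w -> adjK n.+1 (emb u) (emb w).
Proof.
case/hasP => f Hf H; apply/hasP; exists (map emb f); first exact: faces_emb.
have Hs := size_faces Hf.
by case/orP: H => /consecP [] // i _ [-> ->]; rewrite -!V_emb // consecV ?orbT // size_map.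
Qed.

Lemma vertK_lft n k u : vertK n u -> vertK (n + k) (lft k u).
Proof. by elim: k => [|k IH] H; rewrite ?addn0 // addnS; apply: vertK_emb; apply: IH. Qed.

Lemma adjK_lft n k u w : adjK n u w -> adjK (n + k) (lft k u) (lft k w).
Proof. by elim: k => [|k IH] H; rewrite ?addn0 // addnS; apply: adjK_emb; apply: IH. Qed.

Notation LN N x := (lft (N - x.1) x.2).

Lemma LN_up M N (x : nat * pt) : x.1 <= M -> M <= N -> LN N x = lft (N - M) (LN M x).
Proof. by move=> H1 H2; rewrite -lftD; congr lft; lia. Qed.

Lemma lvert_up d x : lvert d x -> exists M, forall N, M <= N -> x.1 <= N /\ vertK (N + d) (LN N x).
Proof.
case=> M [H1 H2]; exists M => N HN; split; first lia.
rewrite (LN_up H1 HN) (_ : N + d = M + d + (N - M)); last lia.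
exact: vertK_lft.
Qed.

Lemma leq_up x y : leq_vert x y -> exists M, forall N, M <= N -> LN N x = LN N y.
Proof.
case=> M [H1 H2 H3]; exists M => N HN.
by rewrite (LN_up H1 HN) (LN_up H2 HN) H3.
Qed.

Lemma ladj_up d x y : ladj d x y -> exists M, forall N, M <= N ->
  [/\ x.1 <= N, y.1 <= N & adjK (N + d) (LN N x) (LN N y)].
Proof.
case=> M [H1 H2 H3]; exists M => N HN; split; try lia.
rewrite (LN_up H1 HN) (LN_up H2 HN) (_ : N + d = M + d + (N - M)); last lia.
exact: adjK_lft.
Qed.

Lemma chain_up d x t : ladj_chain d (x :: t) -> exists M, forall N, M <= N ->
  path (adjK (N + d)) (LN N x) (map (fun z => LN N z) t).
Proof.
elim: t x => [|y t IH] x /=; first by exists 0.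
case=> Hxy Hc; have [M1 H1] := ladj_up Hxy; have [M2 H2] := IH y Hc.
exists (maxn M1 M2) => N HN; rewrite (H2 N) ?andbT; last lia.
by case: (H1 N) => //; lia.
Qed.

Lemma mid_adj M a b : adjK M a b ->
  [/\ vertK M.+1 (mkMid a b), adjK M.+1 a (mkMid a b) & adjK M.+1 (mkMid a b) b].
Proof.
case/hasP => f Hf H; have Hs := size_faces Hf.
case/orP: H => /consecP [] // i _ [-> ->]; [|rewrite mkMid_sym];
  have [_ Hv _] := vertS_V i Hf; split => //.
- exact: (otype_adj Hf (OT1 erefl erefl)).
- exact: (otype_adj Hf (OT5 erefl erefl)).
- rewrite adjK_sym; exact: (otype_adj Hf (OT5 erefl erefl)).
- rewrite adjK_sym; exact: (otype_adj Hf (OT1 erefl erefl)).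
Qed.




Lemma size_omega x t : size (omega_path (x :: t)) = (size t).*2.+1.
Proof. by elim: t x => [|y t IH] x //=; rewrite IH doubleS. Qed.

Lemma pstart_omega p : pstart (omega_path p) = pstart p.
Proof. by case: p => [|x [|y t]]. Qed.

Lemma pend_omega p : pend (omega_path p) = pend p.
Proof.
have H d x t : last d (omega_path (x :: t)) = last x t.
  by elim: t d x => [|y t IH] d x //=; rewrite IH.
by rewrite /pend; case: p => [|x t] //; rewrite H.
Qed.

Lemma lvert01 x : lvert 0 x -> lvert 1 x.
Proof. case=> M [H1 H2]; exists M; split => //; rewrite addn1; rewrite addn0 in H2; exact: persist. Qed.

Lemma mid_ok x y : ladj 0 x y ->
  [/\ lvert 1 (lmid x y), ladj 1 x (lmid x y) & ladj 1 (lmid x y) y].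
Proof.
case=> M [H1 H2 H3]; rewrite addn0 in H3.
have [Hv Ha Hb] := mid_adj H3.
have HK : (lmid x y).1 <= M by rewrite /= geq_max H1 H2.
have HL : LN M (lmid x y) = mkMid (LN M x) (LN M y).
  rewrite /= lft_mkMid -!lftD; congr (mkMid (lft _ _) (lft _ _)); lia.
split.
- by exists M; split => //; rewrite HL addn1.
- by exists M; split => //; rewrite HL addn1.
- by exists M; split => //; rewrite HL addn1.
Qed.

Lemma omega_cons y t : exists r, omega_path (y :: t) = y :: r.
Proof. by case: t => [|z t]; eexists. Qed.

Lemma omega_ok x t : (forall z, z \in x :: t -> lvert 0 z) -> ladj_chain 0 (x :: t) ->
  (forall z, z \in omega_path (x :: t) -> lvert 1 z) /\ ladj_chain 1 (omega_path (x :: t)).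
Proof.
elim: t x => [|y t IH] x Hv Hc.
  by split => // z; rewrite inE => /eqP->; apply: lvert01; apply: Hv; rewrite mem_head.
have E : omega_path [:: x, y & t] = x :: lmid x y :: omega_path (y :: t) by [].
rewrite E; case: Hc => Hxy Hc.
have [IH1 IH2] : (forall z, z \in omega_path (y :: t) -> lvert 1 z) /\ ladj_chain 1 (omega_path (y :: t)).
  by apply: IH Hc => z Hz; apply: Hv; rewrite inE Hz orbT.
have [Hm Ha Hb] := mid_ok Hxy.
split.
- move=> z; rewrite !inE => /orP[/eqP->|/orP[/eqP->|Hz]]; last exact: IH1.
  + by apply: lvert01; apply: Hv; rewrite mem_head.
  + exact: Hm.
- have [r Er] := omega_cons y t; rewrite Er in IH2 *.
  by split => //; split.
Qed.




Lemma path_vert N x p : vertK N x -> path (adjK N) x p -> forall u, u \in x :: p -> vertK N u.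
Proof.
elim: p x => [|y p IH] x Hx /=; first by move=> _ u; rewrite inE => /eqP->.
case/andP => Ha Hp u; rewrite inE => /orP[/eqP->//|Hu].
by apply: (IH y) => //; case: (adjK_vertK Ha).
Qed.

Lemma path_chain N x p : path (adjK N) x p -> ladj_chain 0 (map (pair N) (x :: p)).
Proof.
elim: p x => [|y p IH] x //= /andP[Ha Hp]; split; last exact: IH.
by exists N; rewrite subnn addn0.
Qed.

Lemma geo_part gamma : is_edge_path 0 gamma -> is_geodesic 0 gamma ->
  is_geodesic 1 (omega_path gamma).
Proof.
case: gamma => [[]//|g0 gt] [_ [Hv Hc]] Hg q [Hq0 [Hqv Hqc]].
rewrite pstart_omega pend_omega => Hs He.
case: q Hq0 Hqv Hqc Hs He => [//|z t] _ Hqv Hqc Hs He.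
have [M1 H1] := chain_up Hqc.
have [M2 H2] := leq_up Hs.
have [M3 H3] := leq_up He.
have [M4 H4] := lvert_up (Hv _ (mem_head g0 gt)).
have [M5 H5] := lvert_up (Hv _ (mem_last g0 gt)).
set N := maxn (maxn M1 M2) (maxn M3 (maxn M4 M5)).
have [H41 H42] := H4 N (leq_trans (leq_maxl M4 M5) (leq_trans (leq_maxr M3 _) (leq_maxr _ _))).
have [H51 H52] := H5 N (leq_trans (leq_maxr M4 M5) (leq_trans (leq_maxr M3 _) (leq_maxr _ _))).
have E2 := H2 N (leq_trans (leq_maxr M1 M2) (leq_maxl _ _)).
have E3 := H3 N (leq_trans (leq_maxl M3 _) (leq_maxr _ _)).
have P1 := H1 N (leq_trans (leq_maxl M1 M2) (leq_maxl _ _)).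
rewrite addn0 in H42 H52; rewrite addn1 in P1.
set x0 := LN N g0; set y0 := LN N (last g0 gt).
have Hl : last (LN N z) (map (fun z => LN N z) t) = y0.
  by rewrite (last_map (fun z => LN N z)); move: E3; rewrite /pend /= => ->.
have Ex : LN N z = x0 by move: E2; rewrite /pstart /=.
rewrite Ex in P1 Hl.
have [p [Hp1 Hp2 Hp3]] := core H42 H52 P1 Hl.
have HQ : is_edge_path 0 (map (pair N) (x0 :: p)).
  split => //; split; last exact: path_chain.
  move=> u /mapP[w Hw ->]; exists N; rewrite subnn addn0; split => //.
  exact: path_vert H42 Hp1 _ Hw.
have Hlen : plength (g0 :: gt) <= plength (map (pair N) (x0 :: p)).
  apply: Hg HQ _ _.
  - by exists N; split => //; rewrite /= subnn.
  - exists N; rewrite /pend /= (last_map (pair N)) /= subnn Hp2; split => //.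
rewrite /plength size_omega /= size_map /= in Hlen *.
rewrite size_map in Hp3; lia.
Qed.

Theorem mainTheorem20 (gamma : seq (nat * pt)) :
  is_edge_path 0 gamma -> is_geodesic 0 gamma ->
  [/\ is_edge_path 1 (omega_path gamma),
      plength (omega_path gamma) = 2 * plength gamma
    & is_geodesic 1 (omega_path gamma)].
Proof.
move=> He Hg; split; last exact: geo_part.
- case: gamma He Hg => [[]//|x t] [_ [Hv Hc]] _.
  have [H1 H2] := omega_ok Hv Hc.
  split; last by [].
  by case: t {Hv Hc H1 H2}.
- case: gamma He Hg => [[]//|x t] _ _.
  by rewrite /plength size_omega /= -mul2n.
Qed.
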